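(* Let $U$ and $M$ be $k\times N$ real matrices, and let $\pi$ be a probability distribution on $[k]$ such that $u_{i,j}=\pi(i)m_{i,j}$ for all $i\in[k]$, $j\in[N]$. Then there exists a probability distribution $\widehat\pi$ on $[k]$, with support contained in the support of $\pi$, such that \[ \|M\|_{\ell_\infty\to L_2(\widehat\pi)}\le4\gamma_2^*(U). \]
   Context: For a distribution $\rho$ on $[k]$, $\|a\|_{L_2(\rho)}=(\sum_v\rho(v)a_v^2)^{1/2}$ and $\|M\|_{\ell_\infty\to L_2(\rho)}=\max_{\|f\|_\infty\le1}\|Mf\|_{L_2(\rho)}$. For matrices, $\|M\|_{1\to2}$ is the largest $\ell_2$ norm of a column and $\|M\|_{2\to\infty}$ the largest $\ell_2$ norm of a row; $\gamma_2(M)=\min\{\|R\|_{2\to\infty}\|A\|_{1\to2}:RA=M\}$; $M\bullet N=\sum_{i,j}m_{i,j}n_{i,j}$; $\gamma_2^*(U)=\max\{U\bullet V:\gamma_2(V)\le1\}$. *)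

(* Defs.v *)
From HB Require Import structures.
From mathcomp Require Import all_boot all_order all_algebra.
From mathcomp Require Import boolp classical_sets reals.
Set Implicit Arguments. Unset Strict Implicit. Unset Printing Implicit Defensive.
Import Order.TTheory GRing.Theory Num.Theory.
Local Open Scope ring_scope.
Local Open Scope classical_set_scope.

Section Defs.
Variable R : realType.

Definition is_distr (k : nat) (rho : 'I_k -> R) : Prop :=
  (forall i, 0 <= rho i) /\ \sum_(i < k) rho i = 1.

Definition norm_1_2 (m n : nat) (A : 'M[R]_(m, n)) : R :=
  \big[Num.max/0]_(j < n) Num.sqrt (\sum_(i < m) A i j ^+ 2).

Definition norm_2_inf (m n : nat) (A : 'M[R]_(m, n)) : R :=
  \big[Num.max/0]_(i < m) Num.sqrt (\sum_(j < n) A i j ^+ 2).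

Definition gamma2 (m n : nat) (V : 'M[R]_(m, n)) : R :=
  inf [set x : R | exists (r : nat) (Rm : 'M[R]_(m, r)) (A : 'M[R]_(r, n)),
                     Rm *m A = V /\ x = norm_2_inf Rm * norm_1_2 A].

Definition frob (m n : nat) (A B : 'M[R]_(m, n)) : R :=
  \sum_(i < m) \sum_(j < n) A i j * B i j.

Definition gamma2_dual (m n : nat) (U : 'M[R]_(m, n)) : R :=
  sup [set x : R | exists V : 'M[R]_(m, n), gamma2 V <= 1 /\ x = frob U V].

Definition L2norm (k : nat) (rho : 'I_k -> R) (a : 'cV[R]_k) : R :=
  Num.sqrt (\sum_(v < k) rho v * a v ord0 ^+ 2).

Definition norm_inf_L2 (k n : nat) (rho : 'I_k -> R) (M : 'M[R]_(k, n)) : R :=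
  sup [set x : R | exists f : 'cV[R]_n,
                     (forall j, `|f j ord0| <= 1) /\ x = L2norm rho (M *m f)].

End Defs.

(* Main.v *)
Require Import Defs.
From HB Require Import structures.
From mathcomp Require Import all_boot all_order all_algebra.
From mathcomp Require Import boolp classical_sets reals.
From mathcomp Require Import ring lra.
Set Implicit Arguments. Unset Strict Implicit. Unset Printing Implicit Defensive.
Import Order.TTheory GRing.Theory Num.Theory.
Local Open Scope ring_scope.
Local Open Scope classical_set_scope.

Section Helpers.
Variable R : realType.

Lemma CS_sq (n : nat) (a b : 'I_n -> R) :
  (\sum_i a i * b i) ^+ 2 <= (\sum_i a i ^+ 2) * (\sum_i b i ^+ 2).
Proof.
set A := \sum_i a i ^+ 2; set B := \sum_i b i ^+ 2; set C := \sum_i a i * b i.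
have A0 : 0 <= A by apply: sumr_ge0 => i _; exact: sqr_ge0.
have [A0'|Apos] := eqVneq A 0.
  have az : forall i, a i = 0.
    move=> i; apply/eqP; rewrite -sqrf_eq0; apply/eqP.
    by apply: (psumr_eq0P (P := predT) _ A0') => // j _; exact: sqr_ge0.
  have -> : C = 0 by rewrite /C big1 // => i _; rewrite az mul0r.
  by rewrite A0' expr0n /= mul0r.
have Ap : 0 < A by rewrite lt_def Apos A0.
have E : \sum_i (a i * C - b i * A) ^+ 2 = A * (A * B - C ^+ 2).
  transitivity (\sum_i (C ^+ 2 * a i ^+ 2 - (2 * C * A) * (a i * b i)
                        + A ^+ 2 * b i ^+ 2)).
    by apply: eq_bigr => i _; ring.
  rewrite big_split /= sumrB -!mulr_sumr -/A -/B -/C; ring.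
have : 0 <= A * (A * B - C ^+ 2).
  by rewrite -E; apply: sumr_ge0 => i _; exact: sqr_ge0.
by rewrite pmulr_rge0 // subr_ge0.
Qed.

Lemma CS (n : nat) (a b : 'I_n -> R) :
  `|\sum_i a i * b i| <= Num.sqrt (\sum_i a i ^+ 2) * Num.sqrt (\sum_i b i ^+ 2).
Proof.
rewrite -sqrtrM; last by apply: sumr_ge0 => i _; exact: sqr_ge0.
rewrite -sqrtr_sqr ler_sqrt ?CS_sq //.
by apply: mulr_ge0; apply: sumr_ge0 => i _; exact: sqr_ge0.
Qed.


Lemma n2i_ge0 m n (A : 'M[R]_(m, n)) : 0 <= norm_2_inf A.
Proof. exact: bigmax_ge_id. Qed.

Lemma n12_ge0 m n (A : 'M[R]_(m, n)) : 0 <= norm_1_2 A.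
Proof. exact: bigmax_ge_id. Qed.

Lemma row_le_n2i m n (A : 'M[R]_(m, n)) i :
  Num.sqrt (\sum_j A i j ^+ 2) <= norm_2_inf A.
Proof. exact: (le_bigmax _ (fun i => Num.sqrt (\sum_j A i j ^+ 2))). Qed.

Lemma col_le_n12 m n (A : 'M[R]_(m, n)) j :
  Num.sqrt (\sum_i A i j ^+ 2) <= norm_1_2 A.
Proof. exact: (le_bigmax _ (fun j => Num.sqrt (\sum_i A i j ^+ 2))). Qed.

Lemma n2i_le m n (A : 'M[R]_(m, n)) c : 0 <= c ->
  (forall i, Num.sqrt (\sum_j A i j ^+ 2) <= c) -> norm_2_inf A <= c.
Proof. by move=> c0 H; apply: bigmax_le. Qed.

Lemma n12_le m n (A : 'M[R]_(m, n)) c : 0 <= c ->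
  (forall j, Num.sqrt (\sum_i A i j ^+ 2) <= c) -> norm_1_2 A <= c.
Proof. by move=> c0 H; apply: bigmax_le. Qed.

Lemma gamma2_set_ne m n (V : 'M[R]_(m, n)) :
  [set x : R | exists (r : nat) (Rm : 'M[R]_(m, r)) (A : 'M[R]_(r, n)),
     Rm *m A = V /\ x = norm_2_inf Rm * norm_1_2 A] !=set0.
Proof.
by exists (norm_2_inf (1%:M : 'M[R]_m) * norm_1_2 V), m, 1%:M, V; rewrite mul1mx.
Qed.

Lemma entry_le_gamma2 m n (V : 'M[R]_(m, n)) i j : `|V i j| <= gamma2 V.
Proof.
apply: lb_le_inf; first exact: gamma2_set_ne.
move=> x [r [Rm [A [<- ->]]]].
rewrite mxE.
have := CS (fun l => Rm i l) (fun l => A l j). move=> /le_trans; apply.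

apply: ler_pM; rewrite ?sqrtr_ge0 //; [exact: row_le_n2i | exact: col_le_n12].
Qed.

Lemma gamma2_XY m r n (X : 'M[R]_(m, r)) (Y : 'M[R]_(r, n)) :
  norm_2_inf X <= 1 -> norm_1_2 Y <= 1 -> gamma2 (X *m Y) <= 1.
Proof.
move=> hX hY.
apply: le_trans (_ : norm_2_inf X * norm_1_2 Y <= 1); last first.
  by rewrite -(mulr1 1); apply: ler_pM; rewrite ?n2i_ge0 ?n12_ge0.
apply: ge_inf; last by exists r, X, Y.
exists 0 => x [r' [Rm [A [_ ->]]]].
by apply: mulr_ge0; rewrite ?n2i_ge0 ?n12_ge0.
Qed.

Lemma frob_le_dual m n (U V : 'M[R]_(m, n)) :
  gamma2 V <= 1 -> frob U V <= gamma2_dual U.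
Proof.
move=> hV; apply: ub_le_sup; last by exists V.
exists (\sum_i \sum_j `|U i j|) => x [V' [hV' ->]].
rewrite /frob; apply: le_trans (ler_norm _) _.
apply: le_trans (ler_norm_sum _ _ _) _; apply: ler_sum => i _.
apply: le_trans (ler_norm_sum _ _ _) _; apply: ler_sum => j _.
rewrite normrM -[X in _ <= X]mulr1; apply: ler_wpM2l => //.
exact: le_trans (entry_le_gamma2 V' i j) hV'.
Qed.


Lemma sq_le1 (x : R) : `|x| <= 1 -> x ^+ 2 <= 1.
Proof.
move=> h; rewrite -real_normK ?num_real // -(expr1n _ 2).
by rewrite lerXn2r ?nnegrE.
Qed.

Lemma sqrt_le1 (x : R) : x <= 1 -> Num.sqrt x <= 1.
Proof.
move=> h; case: (leP 0 x) => hx; first by rewrite -sqrtr1 ler_sqrt.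
by rewrite ler0_sqrtr ?ltW.
Qed.

Lemma keyA k N (U M : 'M[R]_(k, N)) (pi : 'I_k -> R) T (F : 'I_T -> 'cV[R]_N) :
  (0 < T)%N ->
  (forall i j, U i j = pi i * M i j) -> (forall t j, `|F t j ord0| <= 1) ->
  \sum_i pi i * (Num.sqrt (\sum_t ((M *m F t) i ord0) ^+ 2) / Num.sqrt T%:R)
    <= gamma2_dual U.
Proof.
move=> T0 hU hF.
set sT := Num.sqrt T%:R.
have sT0 : 0 < sT by rewrite sqrtr_gt0 ltr0n.
have sT2 : sT ^+ 2 = T%:R by rewrite sqr_sqrtr ?ler0n.
set g := fun t i => (M *m F t) i ord0.
set w := fun i => Num.sqrt (\sum_t g t i ^+ 2).
have w2 : forall i, w i ^+ 2 = \sum_t g t i ^+ 2.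
  by move=> i; rewrite sqr_sqrtr //; apply: sumr_ge0 => t _; exact: sqr_ge0.
pose Y : 'M[R]_(T, N) := \matrix_(t, j) (F t j ord0 / sT).
pose X : 'M[R]_(k, T) := \matrix_(i, t) (g t i / w i).
have hY : norm_1_2 Y <= 1.
  apply: n12_le => // j; apply: sqrt_le1.
  have h1 : \sum_(t < T) (T%:R : R)^-1 = 1.
    by rewrite sumr_const card_ord -(mulr_natr ((T%:R : R)^-1) T) mulVf // pnatr_eq0 -lt0n.
  rewrite -h1; apply: ler_sum => t _; rewrite mxE expr_div_n sT2.
  rewrite -[X in _ <= X]mul1r; apply: ler_wpM2r; last exact: sq_le1.
  by rewrite invr_ge0 ler0n.
have hX : norm_2_inf X <= 1.
  apply: n2i_le => // i; apply: sqrt_le1.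
  under eq_bigr => t _ do rewrite mxE expr_div_n.
  rewrite -mulr_suml -w2.
  have [->|wn0] := eqVneq (w i) 0; first by rewrite expr0n /= invr0 mulr0.
  by rewrite mulfV ?expf_neq0.
have := frob_le_dual U (gamma2_XY hX hY).
suff -> : frob U (X *m Y) =
  \sum_i pi i * (Num.sqrt (\sum_t ((M *m F t) i ord0) ^+ 2) / sT) by [].
rewrite /frob; apply: eq_bigr => i _.
transitivity (\sum_t \sum_j pi i * M i j * (X i t * Y t j)).
  rewrite exchange_big /=; apply: eq_bigr => j _.
  by rewrite hU mxE mulr_sumr.
transitivity (\sum_t pi i * X i t / sT * g t i).
  apply: eq_bigr => t _; rewrite /g !mxE [RHS]mulr_sumr; apply: eq_bigr => j _.
  rewrite /Y mxE; ring.
transitivity (pi i / (w i * sT) * \sum_t g t i ^+ 2).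
  rewrite mulr_sumr; apply: eq_bigr => t _; rewrite mxE.
  rewrite invfM; ring.
rewrite -w2 sqrtr_sqr ger0_norm ?sqrtr_ge0 //.
have [->|wn0] := eqVneq (w i) 0; first by rewrite !mul0r invr0 !mulr0 mul0r.
by field; apply/andP; split => //; rewrite gt_eqF.
Qed.

End Helpers.

Section RM.
Variable R : realType.
Variables (k : nat) (S : pred 'I_k) (p0 : 'I_k -> R).
Variables (loss : ('I_k -> R) -> ('I_k -> R)) (B : R).
Hypothesis p0_ge0 : forall i, 0 <= p0 i.
Hypothesis p0_sum : \sum_i p0 i = 1.
Hypothesis p0_S : forall i, ~~ S i -> p0 i = 0.
Hypothesis loss_ge0 : forall p i, 0 <= loss p i.
Hypothesis loss_leB : forall p i, loss p i <= B.

Definition pos (x : R) := Num.max x 0.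
Definition Zs (r : 'I_k -> R) := \sum_(i | S i) pos (r i).
Definition pp (r : 'I_k -> R) : 'I_k -> R := fun i =>
  if 0 < Zs r then (if S i then pos (r i) / Zs r else 0) else p0 i.
Definition ip (p l : 'I_k -> R) := \sum_i p i * l i.
Definition step (r : 'I_k -> R) : 'I_k -> R := fun i =>
  r i + (ip (pp r) (loss (pp r)) - loss (pp r) i).
Definition Rt (t : nat) := iter t step (fun _ => 0).

Lemma pos_ge0 x : 0 <= pos x.
Proof. by rewrite /pos le_max lexx orbT. Qed.

Lemma pos_ge x : x <= pos x.
Proof. by rewrite /pos le_max lexx. Qed.

Lemma Zs_ge0 r : 0 <= Zs r.
Proof. by apply: sumr_ge0 => i _; exact: pos_ge0. Qed.

Lemma pp_ge0 r i : 0 <= pp r i.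
Proof.
rewrite /pp; case: ifP => // Z0; case: ifP => // _.
by apply: divr_ge0; [exact: pos_ge0 | exact: ltW].
Qed.

Lemma pp_S r i : ~~ S i -> pp r i = 0.
Proof. by move=> nS; rewrite /pp (negbTE nS); case: ifP => // _; exact: p0_S. Qed.

Lemma pp_sum r : \sum_i pp r i = 1.
Proof.
case: (ltP 0 (Zs r)) => Z0; last first.
  by rewrite -p0_sum; apply: eq_bigr => i _; rewrite /pp ltNge Z0.
transitivity (\sum_i (if S i then pos (r i) / Zs r else 0)).
  by apply: eq_bigr => i _; rewrite /pp Z0.
rewrite -big_mkcond /=.
have -> : \sum_(i | S i) pos (r i) / Zs r = Zs r / Zs r by rewrite /Zs mulr_suml.
rewrite mulfV //.
by rewrite gt_eqF.
Qed.

Lemma cross r l : \sum_(i | S i) pos (r i) * (ip (pp r) l - l i) = 0.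
Proof.
case: (ltP 0 (Zs r)) => Z0.
  have E : ip (pp r) l = (\sum_(i | S i) pos (r i) * l i) / Zs r.
    rewrite /ip /pp Z0 (bigID S) /= [X in _ + X]big1; last first.
      by move=> i /negbTE ->; rewrite mul0r.
    rewrite addr0 mulr_suml; apply: eq_bigr => i ->; ring.
  under eq_bigr => i _ do rewrite mulrBr.
  rewrite sumrB.
  have -> : \sum_(i | S i) pos (r i) * ip (pp r) l = Zs r * ip (pp r) l.
    by rewrite /Zs mulr_suml.
  rewrite E mulrC divfK ?subrr //.
  by rewrite gt_eqF.
have Z00 : Zs r = 0 by apply/le_anti; rewrite Z0 Zs_ge0.
rewrite big1 // => i Si.
by rewrite (psumr_eq0P (fun j _ => pos_ge0 (r j)) Z00 Si) mul0r.
Qed.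

Lemma ip_ge0 p l : (forall i, 0 <= p i) -> (forall i, 0 <= l i) -> 0 <= ip p l.
Proof. by move=> hp hl; apply: sumr_ge0 => i _; apply: mulr_ge0. Qed.

Lemma ip_leB p l : (forall i, 0 <= p i) -> \sum_i p i = 1 ->
  (forall i, l i <= B) -> ip p l <= B.
Proof.
move=> hp hs hl; rewrite /ip.
apply: le_trans (_ : \sum_i p i * B <= B).
  by apply: ler_sum => i _; apply: ler_wpM2l.
by rewrite -mulr_suml hs mul1r.
Qed.

Lemma pos_step_sq x d : pos (x + d) ^+ 2 <= pos x ^+ 2 + 2 * pos x * d + d ^+ 2.
Proof.
rewrite /pos; case: (leP 0 x) => hx; case: (leP 0 (x + d)) => h; nra.
Qed.

Lemma potential t :
  \sum_(i | S i) pos (Rt t i) ^+ 2 <= t%:R * \sum_(i | S i) B ^+ 2.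
Proof.
elim: t => [|t IH]; first by rewrite mul0r big1 // => i _; rewrite /Rt /= /pos maxxx expr0n.
rewrite /Rt iterS -/(Rt t) /step.
set r := Rt t; set p := pp r; set l := loss p.
apply: le_trans (_ : \sum_(i | S i) (pos (r i) ^+ 2 + 2 * pos (r i) * (ip p l - l i)
                         + (ip p l - l i) ^+ 2) <= _).
  by apply: ler_sum => i _; exact: pos_step_sq.
have E2 : \sum_(i | S i) 2 * pos (r i) * (ip p l - l i) = 0.
  transitivity (2 * \sum_(i | S i) pos (r i) * (ip p l - l i)).
    by rewrite mulr_sumr; apply: eq_bigr => i _; rewrite mulrA.
  by rewrite cross mulr0.
rewrite big_split big_split /= E2 addr0 -nat1r mulrDl mul1r addrC.
apply: lerD => //.
apply: ler_sum => i _.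
have h1 : 0 <= ip p l by apply: ip_ge0 => j; [exact: pp_ge0 | exact: loss_ge0].
have h2 : ip p l <= B by apply: ip_leB; [exact: pp_ge0 | exact: pp_sum | exact: loss_leB].
have h3 := loss_ge0 p i; have h4 := loss_leB p i.
rewrite -/l in h3 h4.
nra.
Qed.

Lemma telescope t i :
  Rt t i = \sum_(s < t) (ip (pp (Rt s)) (loss (pp (Rt s))) - loss (pp (Rt s)) i).
Proof.
elim: t => [|t IH]; first by rewrite big_ord0.
by rewrite big_ord_recr /= -IH.
Qed.

End RM.

Section H3.
Variable R : realType.

Lemma sq_le_nn (a b : R) : 0 <= b -> a ^+ 2 <= b ^+ 2 -> a <= b.
Proof.
move=> hb h; apply: le_trans (ler_norm a) _.
by rewrite -sqrtr_sqr -[X in _ <= X]ger0_norm // -sqrtr_sqr ler_sqrt // sqr_ge0.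
Qed.

Lemma pick_i k (pi z : 'I_k -> R) c :
  (forall i, 0 <= pi i) -> \sum_i pi i = 1 ->
  \sum_i pi i * z i <= c -> exists i, pi i != 0 /\ z i <= c.
Proof.
move=> h0 h1 hs.
case: (pselect (exists i, pi i != 0 /\ z i <= c)) => // hn; exfalso.
have ht : forall i, 0 <= pi i * (z i - c).
  move=> i; case: (eqVneq (pi i) 0) => [->|ne]; first by rewrite mul0r.
  apply: mulr_ge0 => //; rewrite subr_ge0 ltW //; rewrite ltNge; apply/negP => le.
  by apply: hn; exists i.
have hs0 : \sum_i pi i * (z i - c) = 0.
  apply/le_anti; rewrite sumr_ge0 ?andbT; last by move=> i _.
  under eq_bigr => i _ do rewrite mulrBr.
  by rewrite sumrB -mulr_suml h1 mul1r subr_le0.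
have : \sum_i pi i = 0.
  rewrite big1 // => i _.
  case: (eqVneq (pi i) 0) => // ne; exfalso.
  have := psumr_eq0P (P := predT) (fun i _ => ht i) hs0 (erefl true : predT i).
  move/eqP; rewrite mulf_eq0 (negbTE ne) /= subr_eq0 => /eqP ez.
  by apply: hn; exists i; split; last by rewrite ez.
by rewrite h1; apply/eqP; rewrite oner_eq0.
Qed.

End H3.

Local Close Scope classical_set_scope.
Unset Implicit Arguments.
Set Strict Implicit.

Theorem lemma3p7 (R : realType) (k N : nat) (U M : 'M[R]_(k, N)) (pi : 'I_k -> R) :
  is_distr pi ->
  (forall i j, U i j = pi i * M i j) ->
  exists pihat : 'I_k -> R,
    is_distr pihat /\ (forall i, pihat i != 0 -> pi i != 0) /\
    norm_inf_L2 pihat M <= 4 * gamma2_dual U.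
Proof.
move=> [pi_ge0 pi_sum] hU.
set gam := gamma2_dual U.
pose cube := fun f : 'cV[R]_N => forall j, `|f j ord0| <= 1.
pose Q := fun (p : 'I_k -> R) (f : 'cV[R]_N) => \sum_i p i * ((M *m f) i ord0) ^+ 2.
pose Bm := \sum_i \sum_j `|M i j|.
have Bm0 : 0 <= Bm by apply: sumr_ge0 => i _; apply: sumr_ge0 => j _.
have Mf_le : forall f, cube f -> forall i, ((M *m f) i ord0) ^+ 2 <= Bm ^+ 2.
  move=> f hf i; rewrite -real_normK ?num_real //.
  apply: lerXn2r; rewrite ?nnegrE //.
  rewrite mxE; apply: le_trans (ler_norm_sum _ _ _) _.
  apply: le_trans (_ : \sum_j `|M i j| <= Bm).
    apply: ler_sum => j _; rewrite normrM -[X in _ <= X]mulr1.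
    by apply: ler_wpM2l.
  rewrite /Bm (bigD1 i) //= lerDl; apply: sumr_ge0 => i' _.
  by apply: sumr_ge0.
have cube0 : cube 0 by move=> j; rewrite mxE normr0.
have L2Q : forall p f, L2norm p (M *m f) = Num.sqrt (Q p f) by [].
have gam0 : 0 <= gam.
  have := @keyA R k N U M pi 1 (fun _ => 0) (erefl _) hU (fun _ => cube0).
  apply: le_trans; rewrite big1 // => i _.
  by rewrite big1 ?sqrtr0 ?mul0r ?mulr0 // => t _; rewrite mulmx0 mxE expr0n.
have [gpos|gneg] := ltP 0 gam; last first.
  have g00 : gam = 0 by apply/le_anti; rewrite gneg gam0.
  exists pi; split; first by []; split; first by [].
  apply: ge_sup; first by exists (L2norm pi (M *m 0)), 0.
  move=> x [f [hf ->]].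
  have := @keyA R k N U M pi 1 (fun _ => f) (erefl _) hU (fun _ => hf).
  under eq_bigr => i _ do rewrite big_ord1 sqrtr1 divr1 sqrtr_sqr.
  rewrite -/gam g00 => hs.
  have ht : forall i, 0 <= pi i * `|(M *m f) i ord0| by move=> i; rewrite mulr_ge0.
  have hs0 : \sum_i pi i * `|(M *m f) i ord0| = 0.
    by apply/le_anti; rewrite hs sumr_ge0.
  rewrite L2Q /Q big1 ?sqrtr0 ?mulr0 // => i _.
  have := psumr_eq0P (P := predT) (fun i _ => ht i) hs0 (erefl true : predT i).
  by rewrite -real_normK ?num_real // expr2 mulrA => ->; rewrite mul0r.
pose eps := gam ^+ 2.
have eps0 : 0 < eps by rewrite exprn_gt0.
have brP : forall p : 'I_k -> R, exists f, cube f /\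
    forall f', cube f' -> Q p f' <= Q p f + eps.
  move=> p.
  pose E : set R := fun x => exists f, cube f /\ x = Q p f.
  have hE : has_sup E.
    split; first by exists (Q p 0), 0.
    exists (\sum_i `|p i| * Bm ^+ 2); move=> x [f [hf ->]].
    rewrite /Q; apply: le_trans (ler_norm _) _.
    apply: le_trans (ler_norm_sum _ _ _) _.
    apply: ler_sum => i _; rewrite normrM; apply: ler_wpM2l => //.
    by rewrite ger0_norm ?sqr_ge0 // Mf_le.
  have [e [f [hf ->]] he] := sup_adherent eps0 hE.
  exists f; split => // f' hf'.
  have h : Q p f' <= sup E by apply: sup_upper_bound => //; exists f'.
  by apply: ltW; apply: le_lt_trans h _; rewrite -ltrBlDr.
have [br hbr] := choice brP.
pose loss := fun p : 'I_k -> R => fun i => ((M *m br p) i ord0) ^+ 2.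
pose S : pred 'I_k := fun i => pi i != 0.
have p0S : forall i, ~~ S i -> pi i = 0 by move=> i /negPn /eqP.
have lge0 : forall p i, 0 <= loss p i by move=> p i; exact: sqr_ge0.
have lleB : forall p i, loss p i <= Bm ^+ 2.
  by move=> p i; apply: Mf_le; case: (hbr p).
pose C := \sum_(i | S i) (Bm ^+ 2) ^+ 2.
have C0 : 0 <= C by apply: sumr_ge0 => i _; exact: sqr_ge0.
have [T hT] : exists T : nat, C / eps ^+ 2 < T%:R by eexists; exact: truncnS_gt.
have TR0 : 0 < T%:R :> R.
  by apply: le_lt_trans hT; apply: divr_ge0 => //; exact: sqr_ge0.
have Tpos : (0 < T)%N by rewrite -(ltr0n R).
have hT' : C < T%:R * eps ^+ 2 by rewrite -ltr_pdivrMr // exprn_gt0.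
pose ps := fun s : nat => pp S pi (Rt S pi loss s).
pose pihat := fun i => (\sum_(s < T) ps s i) / T%:R.
have pihat0 : forall i, 0 <= pihat i.
  move=> i; apply: divr_ge0; last exact: ler0n.
  by apply: sumr_ge0 => s _; exact: pp_ge0.
exists pihat; split; [split|split].
- exact: pihat0.
- rewrite /pihat -mulr_suml exchange_big /=.
  under eq_bigr => s _ do rewrite (pp_sum S pi_sum).
  by rewrite sumr_const card_ord mulfV // gt_eqF.
- move=> i hi; apply/eqP => e; move: hi.
  rewrite /pihat big1 ?mul0r ?eqxx // => s _; apply: (pp_S p0S).
  by rewrite /S e eqxx.
apply: ge_sup; first by exists (L2norm pihat (M *m 0)), 0.
move=> x [f [hf ->]].
rewrite L2Q.
have Q0 : 0 <= Q pihat f.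
  by apply: sumr_ge0 => i _; apply: mulr_ge0; [exact: pihat0 | exact: sqr_ge0].
suff hQ : Q pihat f <= 3 * gam ^+ 2.
  apply: sq_le_nn; first by rewrite mulr_ge0 // ltW.
  rewrite sqr_sqrtr //; apply: le_trans hQ _.
  rewrite exprMn; have := sqr_ge0 gam; nra.
pose ip_s := fun s : nat => ip (ps s) (loss (ps s)).
have e1 : Q pihat f = (\sum_(s < T) Q (ps s) f) / T%:R.
  rewrite /Q /pihat exchange_big /= mulr_suml; apply: eq_bigr => i _.
  by rewrite mulrAC mulr_suml.
have e2 : forall s, Q (ps s) f <= ip_s s + eps.
  by move=> s; exact: ((hbr (ps s)).2 f hf).
have hk := @keyA R k N U M pi T (fun s => br (ps s)) Tpos hU
  (fun s => (hbr (ps s)).1).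
have [i0 [pi0 hi0]] := pick_i pi_ge0 pi_sum hk.
have hL : \sum_(s < T) loss (ps s) i0 <= T%:R * gam ^+ 2.
  have hi0' : Num.sqrt (\sum_(s < T) loss (ps s) i0) / Num.sqrt T%:R <= gam := hi0.
  have L0 : 0 <= \sum_(s < T) loss (ps s) i0 by apply: sumr_ge0 => s _.
  move: hi0'; rewrite ler_pdivrMr ?sqrtr_gt0 // => h.
  have h2 : Num.sqrt (\sum_(s < T) loss (ps s) i0) ^+ 2
            <= (gam * Num.sqrt T%:R) ^+ 2.
    by apply: lerXn2r; rewrite ?nnegrE ?sqrtr_ge0 ?mulr_ge0 ?sqrtr_ge0 // ltW.
  by rewrite sqr_sqrtr // exprMn sqr_sqrtr ?ler0n // mulrC in h2.
have hR : Rt S pi loss T i0 <= T%:R * eps.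
  apply: le_trans (pos_ge _) _.
  apply: sq_le_nn; first by rewrite mulr_ge0 // ltW.
  have hpot := potential S pi_ge0 pi_sum lge0 lleB T.
  apply: le_trans (_ : \sum_(i | S i) pos (Rt S pi loss T i) ^+ 2 <= _).
    rewrite (bigD1 i0) //= lerDl; apply: sumr_ge0 => i _; exact: sqr_ge0.
  apply: le_trans hpot _; rewrite -/C exprMn expr2 -mulrA.
  by apply: ler_wpM2l; [exact: ler0n | exact: ltW].
have htel : \sum_(s < T) ip_s s = \sum_(s < T) loss (ps s) i0 + Rt S pi loss T i0.
  by rewrite telescope sumrB addrC subrK.
rewrite e1 ler_pdivrMr //.
apply: le_trans (_ : \sum_(s < T) (ip_s s + eps) <= _).
  by apply: ler_sum => s _; exact: e2.
rewrite big_split /= htel sumr_const card_ord -mulr_natr.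
rewrite /eps in hR *; nra.
Qed.
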